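(* Let $\mathcal{H}$ be a complex Hilbert space of finite dimension $d\geq 1$, let $N_d = 3^d\cdot \mathrm{lcm}\{3^1-2^1,3^2-2^2,\ldots,3^d-2^d\}$, and let $U,V$ be unitary operators on $\mathcal{H}$ with $V^{-1}U^2V=U^3$. Then for every $\lambda\in\mathbb{R}$ such that $e^{2\pi i\lambda}$ is an eigenvalue of $U$, one has $N_d\lambda\in\mathbb{Z}$. Consequently, if $e^{2\pi i\lambda}$ is an eigenvalue of $U$, then $-e^{2\pi i\lambda}$ is not an eigenvalue of $U$, and every eigenvector of $U^2$ is an eigenvector of $U$. *)

(* Defs.v *)
From HB Require Import structures.
From mathcomp Require Import all_boot all_order all_algebra.
Set Implicit Arguments. Unset Strict Implicit. Unset Printing Implicit Defensive.
Import Order.TTheory GRing.Theory Num.Theory.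
Local Open Scope ring_scope.

Definition adjoint (C : numClosedFieldType) (d : nat) (A : 'M[C]_d) : 'M[C]_d :=
  (map_mx Num.conj A)^T.

Definition unitary_mx (C : numClosedFieldType) (d : nat) (A : 'M[C]_d) : Prop :=
  A *m adjoint A = 1%:M /\ adjoint A *m A = 1%:M.

Definition is_eigenvector (C : numClosedFieldType) (d : nat) (A : 'M[C]_d)
  (v : 'cV[C]_d) : Prop := v != 0 /\ exists z : C, A *m v = z *: v.

Definition is_eigenvalue (C : numClosedFieldType) (d : nat) (A : 'M[C]_d)
  (z : C) : Prop := exists v : 'cV[C]_d, v != 0 /\ A *m v = z *: v.

Definition Nd (d : nat) : nat :=
  (3 ^ d * \big[lcmn/1%N]_(1 <= k < d.+1) (3 ^ k - 2 ^ k))%N.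

(* Main.v *)
Require Import Defs.
From HB Require Import structures.
From mathcomp Require Import all_boot all_order all_algebra.
Import Order.TTheory GRing.Theory Num.Theory.
Local Open Scope ring_scope.

Section Aux.
Variables (C : numClosedFieldType) (d : nat).

Lemma eig_root (U : 'M[C]_d) z : is_eigenvalue U z -> root (char_poly U^T) z.
Proof.
move=> [v [nz Hv]]; rewrite -eigenvalue_root_char; apply/eigenvalueP.
exists v^T; first by rewrite -trmx_mul Hv linearZ.
by rewrite trmx_eq0.
Qed.

Lemma few_roots (A : 'M[C]_d) (f : nat -> C) :
  (forall k, (k <= d)%N -> root (char_poly A) (f k)) ->
  exists i j, [/\ (i < j)%N, (j <= d)%N & f i = f j].
Proof.
move=> Hr.
set s := [seq f k | k <- iota 0 d.+1].
have Hs : size s = d.+1 by rewrite size_map size_iota.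
have : ~~ uniq s.
  apply/negP => Hu.
  have Ha : all (root (char_poly A)) s.
    apply/allP => x /mapP [k]; rewrite mem_iota add0n => /andP [_ Hk] ->.
    exact: Hr.
  have := max_poly_roots (monic_neq0 (char_poly_monic A)) Ha Hu.
  by rewrite Hs size_char_poly ltnn.
move/(uniqPn 0) => [i [j [Hij Hj]]].
rewrite Hs in Hj.
rewrite !(nth_map 0%N) ?size_iota //; last exact: ltn_trans Hj.
rewrite !nth_iota //; last exact: ltn_trans Hj.
rewrite !add0n => E; exists i, j; split => //.
Qed.

Lemma sq_eig (A : 'M[C]_d) (x : 'cV[C]_d) mu :
  x != 0 -> A *m A *m x = mu *: x ->
  exists w, is_eigenvalue A w /\ w ^+ 2 = mu.
Proof.
move=> nz H.
set r := sqrtC mu.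
set y := A *m x + r *: x.
have [y0|ynz] := eqVneq y 0.
  exists (- r); split; last by rewrite sqrrN sqrtCK.
  exists x; split => //.
  by apply/eqP; rewrite scaleNr -subr_eq0 opprK -/y y0.
exists r; split; last by rewrite sqrtCK.
exists y; split => //.
rewrite /y mulmxDr mulmxA H -scalemxAr -[mu]sqrtCK -/r expr2.
by rewrite -scalerA scalerDr addrC.
Qed.

End Aux.

Lemma odd_lcm a b : odd a -> odd b -> odd (lcmn a b).
Proof.
move=> oa ob; rewrite -[odd _]negbK -dvdn2; apply/negP => H.
have : (2 %| a * b)%N by apply: dvdn_trans H _; rewrite dvdn_lcm dvdn_mulr ?dvdn_mull.
by rewrite dvdn2 oddM oa ob.
Qed.

Lemma odd_Nd d : odd (Nd d).
Proof.
rewrite /Nd oddM oddX orbT /=.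
rewrite big_nat_cond.
apply: (big_ind (fun n => odd n)) => //; first exact: odd_lcm.
move=> k /andP [/andP [k1 _] _].
have k0 : (0 < k)%N by [].
rewrite oddB ?oddX /=; last by rewrite leq_exp2r.
by case: k k1 k0.
Qed.

Lemma dvd_biglcm (F : nat -> nat) m n k : (m <= k < n)%N ->
  (F k %| \big[lcmn/1%N]_(m <= i < n) F i)%N.
Proof.
elim: n => [|n IH] /andP [mk kn]; first by [].
rewrite big_nat_recr /=; last by apply: leq_trans mk _.
have [->|kn'] := eqVneq k n; first exact: dvdn_lcmr.
apply: dvdn_trans (dvdn_lcml _ _); apply: IH.
by rewrite mk /= ltn_neqAle kn' -ltnS.
Qed.

Section Main.
Variables (C : numClosedFieldType) (d : nat) (U V : 'M[C]_d).
Hypotheses (hU : unitary_mx U) (hV : unitary_mx V)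
  (hUV : invmx V *m (U *m U) *m V = U *m U *m U).

Lemma eig_neq0 w : is_eigenvalue U w -> w != 0.
Proof.
move=> [v [nz Hv]]; apply/eqP => w0; move: Hv; rewrite w0 scale0r => Hv.
move/eqP: nz; apply.
by rewrite -[v]mul1mx -hU.2 -mulmxA Hv mulmx0.
Qed.

Lemma step z : is_eigenvalue U z ->
  exists w, is_eigenvalue U w /\ w ^+ 2 = z ^+ 3.
Proof.
move=> [v [nz Hv]].
have Vu : V \in unitmx by case: (mulmx1_unit hV.1).
have key : U *m U *m V = V *m (U *m U *m U).
  by rewrite -hUV !mulmxA mulmxV // mul1mx.
apply: (@sq_eig _ _ U (V *m v)).
  apply/eqP => x0; move/eqP: nz; apply.
  by rewrite -[v]mul1mx -hV.2 -mulmxA x0 mulmx0.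
rewrite mulmxA key -!mulmxA.
do 3 rewrite Hv -?scalemxAr.
by rewrite !scalerA -!expr2 -exprSr.
Qed.

Lemma chain n z : is_eigenvalue U z -> exists f : nat -> C,
  [/\ f 0%N = z, (forall k, (k <= n)%N -> is_eigenvalue U (f k))
    & (forall k, (k < n)%N -> f k.+1 ^+ 2 = f k ^+ 3)].
Proof.
move=> Hz; elim: n => [|n [f [f0 fe fr]]].
  by exists (fun _ => z); split => // k; rewrite leqn0 => /eqP ->.
have [w [Hw w2]] := step (f n) (fe n (leqnn n)).
exists (fun k => if k == n.+1 then w else f k); split => //.
  move=> k; rewrite leq_eqVlt; case: eqP => [_ _ //|_ /= Hk].
  exact: fe.
move=> k Hk; rewrite eqSS.
have -> : (k == n.+1) = false by apply/negbTE; rewrite neq_ltn Hk.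
case: eqP => [->//|kn]; apply: fr.
by rewrite ltn_neqAle; apply/andP; split; [apply/eqP|].
Qed.

Lemma iter_rel (f : nat -> C) n : (forall k, (k < n)%N -> f k.+1 ^+ 2 = f k ^+ 3) ->
  forall i k, (i + k <= n)%N -> f (i + k)%N ^+ (2 ^ k) = f i ^+ (3 ^ k).
Proof.
move=> fr i; elim => [|k IH] Hk; first by rewrite addn0 !expn0 !expr1.
rewrite addnS expnS exprM fr; last by rewrite -addnS.
rewrite -exprM mulnC exprM IH; last by apply: ltnW; rewrite -addnS.
by rewrite -exprM mulnC -expnS.
Qed.

Lemma part1 z : is_eigenvalue U z -> z ^+ Nd d = 1.
Proof.
move=> Hz.
have [f [f0 fe fr]] := chain d z Hz.
have [i [j [ij jd fij]]] := @few_roots C d U^T f (fun k hk => @eig_root C d U _ (fe k hk)).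
set k := (j - i)%N.
have ijk : (i + k = j)%N by rewrite /k subnKC // ltnW.
have Hit := iter_rel f d fr.
have wk : f i ^+ (2 ^ k) = f i ^+ (3 ^ k).
  by rewrite {1}fij -ijk Hit // ijk.
have w0 : f i != 0 by apply: eig_neq0; apply: fe; apply: leq_trans jd; apply: ltnW.
have k0 : (0 < k)%N by rewrite /k subn_gt0.
have le23 : (2 ^ k <= 3 ^ k)%N by rewrite leq_exp2r.
have wM : f i ^+ (3 ^ k - 2 ^ k) = 1.
  apply: (mulfI (expf_neq0 (2 ^ k) w0)).
  by rewrite -exprD subnKC // mulr1.
have kd : (1 <= k < d.+1)%N.
  rewrite k0 /= ltnS; apply: leq_trans jd; exact: leq_subr.
have /dvdnP [q Lq] := @dvd_biglcm (fun k => 3 ^ k - 2 ^ k)%N 1 d.+1 k kd.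
have id : (i <= d)%N by apply: ltnW; apply: leq_trans jd.
have zi : z ^+ (3 ^ i) = f i ^+ (2 ^ i) by rewrite -f0 -Hit.
rewrite /Nd Lq -(subnKC id) expnD -mulnA exprM zi -!exprM.
rewrite mulnC mulnA mulnC mulnA mulnC exprM wM expr1n //.
Qed.

Lemma part2 z : is_eigenvalue U z -> ~ is_eigenvalue U (- z).
Proof.
move=> Hz Hmz.
have := part1 (-z) Hmz; rewrite exprNn -signr_odd odd_Nd (part1 z Hz) expr1 mulr1.
move/eqP; rewrite -subr_eq0 -opprD oppr_eq0.
by rewrite -[1 + 1]/(2%:R) pnatr_eq0.
Qed.

Lemma part3 v : is_eigenvector (U *m U) v -> is_eigenvector U v.
Proof.
move=> [nz [mu H]]; split => //.
set r := sqrtC mu.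
have Hr : mu = r * r by rewrite -expr2 sqrtCK.
set y := U *m v + r *: v.
set u := U *m v - r *: v.
have [y0|ynz] := eqVneq y 0.
  by exists (- r); apply/eqP; rewrite scaleNr -subr_eq0 opprK -/y y0.
have [u0|unz] := eqVneq u 0.
  by exists r; apply/eqP; rewrite -subr_eq0 -/u u0.
exfalso; apply: (@part2 r).
  exists y; split => //.
  rewrite /y mulmxDr mulmxA H -scalemxAr Hr -scalerA scalerDr addrC //.
exists u; split => //.
rewrite /u mulmxBr mulmxA H -scalemxAr Hr -scalerA scaleNr scalerBr.
by rewrite opprB addrC.
Qed.

End Main.

Theorem mainTheorem5 (C : numClosedFieldType) (d : nat) (hd : (0 < d)%N)
  (U V : 'M[C]_d) (hU : unitary_mx U) (hV : unitary_mx V)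
  (hUV : invmx V *m (U *m U) *m V = U *m U *m U) :
  (forall z : C, is_eigenvalue U z -> z ^+ Nd d = 1) /\
  (forall z : C, is_eigenvalue U z -> ~ is_eigenvalue U (- z)) /\
  (forall v : 'cV[C]_d, is_eigenvector (U *m U) v -> is_eigenvector U v).
Proof.
split; first by move=> z Hz; apply: (@part1 C d U V); try assumption.
split; first by move=> z Hz; apply: (@part2 C d U V); try assumption.
by move=> v Hv; apply: (@part3 C d U V); try assumption.
Qed.
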